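(* For $r\ge2$ and odd $s\ge3$: $\operatorname{zir}(H(r,s))=2$, $\operatorname{Z}(H(r,s))=r$, and $\operatorname{ZIR}(H(r,s))=r+\frac{s-1}{2}$. For $r\ge2$ and odd $s\ge5$, $\overline{\operatorname{Z}}(H(r,s))=r+1$. For $r\ge2$, $\overline{\operatorname{Z}}(H(r,3))=r$.
   Context: $H(r,s)$ is built as follows: take $K_{2,r}$ with smaller part $\{u,u'\}$ and larger part $\{w_1,\dots,w_r\}$, and the path $P_s$ with vertices $y_1,\dots,y_s$ in path order; identify $u'$ with $y_s$. It has order $r+s+1$. Zero forcing: a blue vertex $u$ changes a white vertex $w$ to blue if $w$ is the only white neighbor of $u$; $B$ is a zero forcing set if from blue set $B$ eventually all vertices are blue; $\operatorname{Z}(G)$ is the minimum size of a zero forcing set and $\overline{\operatorname{Z}}(G)$ the maximum size of an inclusion-minimal zero forcing set. A nonempty $F\subseteq V(G)$ is a fort if every $v\notin F$ has $|N(v)\cap F|\ne1$. A private fort of $x\in S$ relative to $S$ is a fort $F$ with $S\cap F=\{x\}$; $S$ is a ZIr-set if every element of $S$ has a private fort. $\operatorname{zir}(G)$ / $\operatorname{ZIR}(G)$ are the minimum / maximum cardinality of an inclusion-maximal ZIr-set. *)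

(* Defs.v *)
From mathcomp Require Import all_boot.
Set Implicit Arguments. Unset Strict Implicit. Unset Printing Implicit Defensive.

Section Graph.
Variables (T : finType) (e : rel T).

Definition nbhd (v : T) : {set T} := [set w | e v w].

(** One round of zero forcing: every blue vertex v with exactly one white
    neighbour w turns w blue. (Forcing is monotone, so performing all
    available forces simultaneously yields the same final colouring.) *)
Definition zf_step (B : {set T}) : {set T} :=
  B :|: [set w | [exists v in B, nbhd v :\: B == [set w]]].

Definition zf_closure (B : {set T}) : {set T} := iter #|T| zf_step B.

Definition zero_forcing_set (B : {set T}) : bool := zf_closure B == setT.

Definition Zf : nat :=
  \big[minn/#|T|]_(B : {set T} | zero_forcing_set B) #|B|.

Definition Zbar : nat :=
  \max_(B : {set T} | minset zero_forcing_set B) #|B|.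

Definition fort (F : {set T}) : bool :=
  (F != set0) && [forall v, (v \notin F) ==> (#|nbhd v :&: F| != 1)].

Definition private_fort (S : {set T}) (x : T) (F : {set T}) : bool :=
  fort F && (S :&: F == [set x]).

Definition ZIr_set (S : {set T}) : bool :=
  [forall x in S, exists F : {set T}, private_fort S x F].

Definition zir : nat :=
  \big[minn/#|T|]_(S : {set T} | maxset ZIr_set S) #|S|.

Definition ZIR : nat :=
  \max_(S : {set T} | maxset ZIr_set S) #|S|.

End Graph.

(** The graph H(r,s) on vertex set {0,...,r+s}:
    0 = u, 1..r = w_1..w_r, r+j = y_j (1 <= j <= s), and u' = y_s = r+s.
    Edges: u w_i, u' w_i (all i), y_j y_(j+1) (1 <= j < s). *)
Definition H_adj_nat (r s x y : nat) : bool :=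
  let isw i := (1 <= i <= r) in
  let isy i := (r + 1 <= i <= r + s) in
  [|| (x == 0) && isw y, (y == 0) && isw x,
      (x == r + s) && isw y, (y == r + s) && isw x,
      [&& isy x, isy y & y == x.+1] | [&& isy x, isy y & x == y.+1] ].

Definition H_adj (r s : nat) : rel 'I_(r + s + 1) :=
  fun x y => H_adj_nat r s x y.
Arguments H_adj : clear implicits.

(* Main.v *)
Require Import Defs.
From mathcomp Require Import all_boot zify.
Set Implicit Arguments. Unset Strict Implicit. Unset Printing Implicit Defensive.

Section Gen.
Variables (T : finType) (e : rel T).
Implicit Types (A B F S : {set T}).

Lemma fortI F : F != set0 ->
  (forall v, v \notin F -> (forall x, e v x -> x \notin F) \/
      exists a b, [/\ a \in F, b \in F, a != b, e v a & e v b]) -> fort e F.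
Proof.
move=> F0 H; rewrite /fort F0 /=; apply/forallP=> v; apply/implyP=> vF.
case: (H v vF) => [Hn | [a [b [aF bF ab va vb]]]].
- suff ->: nbhd e v :&: F = set0 by rewrite cards0.
  apply/setP=> x; rewrite !inE; apply/negbTE; apply/negP=> /andP[vx xF].
  by move: (Hn x vx); rewrite xF.
- apply/negP=> /cards1P [x Hx].
  have : a \in nbhd e v :&: F by rewrite !inE va aF.
  have : b \in nbhd e v :&: F by rewrite !inE vb bF.
  rewrite Hx !inE => /eqP Eb /eqP Ea. by rewrite Ea Eb eqxx in ab.
Qed.

Lemma fort_rule F v w : fort e F -> v \notin F -> e v w ->
  (forall x, e v x -> x != w -> x \notin F) -> w \notin F.
Proof.
case/andP=> _ /forallP Hf vF vw Hx; apply/negP=> wF.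
have Heq : nbhd e v :&: F = [set w].
  apply/setP=> x; rewrite !inE; apply/andP/eqP => [[vx xF]|->]; last by split.
  apply/eqP; apply: contraLR xF => xw. exact: Hx.
have := implyP (Hf v) vF. by rewrite Heq cards1.
Qed.

Lemma fort_neq0 F : fort e F -> F != set0.
Proof. by case/andP. Qed.

Lemma fort_sup (F F' : {set T}) : F != set0 -> F \subset F' ->
  (forall v, v \notin F' -> exists a b, [/\ a \in F, b \in F, a != b, e v a & e v b]) ->
  fort e F'.
Proof.
move=> F0 sFF' H; apply: fortI.
  apply: contraNneq F0 => E; apply/eqP/setP=> x; rewrite inE.
  apply/negbTE/negP=> xF; move: (subsetP sFF' x xF); by rewrite E inE.
move=> v vF'; right; have [a [b [aF bF ab va vb]]] := H v vF'.
exists a, b; split => //; exact: (subsetP sFF').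
Qed.

Lemma step_sub B : B \subset zf_step e B.
Proof. exact: subsetUl. Qed.

Lemma step_disj F B : fort e F -> F :&: B = set0 -> F :&: zf_step e B = set0.
Proof.
move=> fF FB; apply/setP=> x; rewrite !inE; apply/negbTE/negP=> /andP[xF].
have nB y : y \in F -> y \notin B.
  move=> yF; apply/negP=> yB; have : y \in F :&: B by rewrite inE yF yB.
  by rewrite FB inE.
case/orP=> [xB|/existsP[v /andP[vB /eqP Hv]]]; first by move: (nB x xF); rewrite xB.
have vF : v \notin F by apply: contraL vB => vF; exact: nB.
have xv : x \in nbhd e v :\: B by rewrite Hv inE.
have : x \notin F.
  apply: (fort_rule fF vF); first by move: xv; rewrite !inE => /andP[_].
  move=> y vy yx; apply/negP=> yF.
  have : y \in nbhd e v :\: B by rewrite !inE vy (nB y yF).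
  by rewrite Hv inE (negbTE yx).
by rewrite xF.
Qed.

Lemma iter_disj F B k : fort e F -> F :&: B = set0 ->
  F :&: iter k (zf_step e) B = set0.
Proof. move=> fF FB; elim: k => //= k IH; exact: step_disj. Qed.

Lemma iter_sup B k : B \subset iter k (zf_step e) B.
Proof. elim: k => //= k IH; exact: subset_trans IH (step_sub _). Qed.

Lemma iter_fix B k : zf_step e (iter k (zf_step e) B) = iter k (zf_step e) B \/
   k <= #|iter k (zf_step e) B|.
Proof.
elim: k => [|k IH]; first by right.
case: IH => [fx|le]; first by left; rewrite /= fx fx.
case: (eqVneq (zf_step e (iter k (zf_step e) B)) (iter k (zf_step e) B)) => [fx|ne].
  by left; rewrite /= fx fx.
right; rewrite /=; apply: leq_ltn_trans le _; apply: proper_card.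
by rewrite properEneq eq_sym ne step_sub.
Qed.

Lemma closure_fix B : zf_step e (zf_closure e B) = zf_closure e B.
Proof.
rewrite /zf_closure; case: (iter_fix B #|T|) => // le.
have -> : iter #|T| (zf_step e) B = setT.
  by apply/eqP; rewrite eqEcard subsetT cardsT le.
by apply/eqP; rewrite eqEsubset subsetT step_sub.
Qed.

Lemma zfP B : reflect (forall F, fort e F -> F :&: B != set0) (zero_forcing_set e B).
Proof.
apply: (iffP idP).
  move=> /eqP zB F fF; apply/negP=> /eqP FB.
  have := iter_disj #|T| fF FB; rewrite -/(zf_closure e B) zB setIT => F0.
  by move: (fort_neq0 fF); rewrite F0 eqxx.
move=> H; rewrite /zero_forcing_set; apply/negPn/negP=> nT.
set C := zf_closure e B in nT *.
have fC : fort e (~: C).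
  rewrite /fort; apply/andP; split.
    apply: contra nT => /eqP E; apply/eqP; by rewrite -[C]setCK E setC0.
  apply/forallP=> v; apply/implyP; rewrite inE negbK => vC.
  apply/negP=> /cards1P [w Hw].
  have Hw' : nbhd e v :\: C = [set w] by rewrite setDE.
  have : w \in zf_step e C.
    rewrite /zf_step !inE; apply/orP; right; apply/existsP; exists v; by rewrite vC Hw' eqxx.
  rewrite closure_fix => wC.
  have : w \in nbhd e v :&: ~: C by rewrite Hw inE.
  by rewrite !inE wC andbF.
suff E : ~: C :&: B = set0 by move: (H _ fC); rewrite E eqxx.
apply/setP=> x; rewrite !inE.
apply/negbTE/negP=> /andP[xC xB]; move: xC; by rewrite (subsetP (iter_sup B #|T|) x xB).
Qed.

Lemma zf_sup B (B' : {set T}) : zero_forcing_set e B -> B \subset B' -> zero_forcing_set e B'.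
Proof.
move=> /zfP H sBB'; apply/zfP=> F fF; have := H F fF.
apply: contraNneq => E; apply/eqP/setP=> x; rewrite !inE.
apply/negbTE/negP=> /andP[xF xB].
have : x \in F :&: B' by rewrite inE xF (subsetP sBB').
by rewrite E inE.
Qed.

Lemma zf_meet B F : zero_forcing_set e B -> fort e F -> exists2 x, x \in F & x \in B.
Proof.
move=> /zfP H fF; have := H F fF; case/set0Pn=> x /setIP[]; by exists x.
Qed.

Lemma minZF_priv B : zero_forcing_set e B ->
  (forall b, b \in B -> exists F, fort e F /\ b \in F /\ (forall y, y \in B -> y != b -> y \notin F)) ->
  minset (zero_forcing_set e) B.
Proof.
move=> zB H; apply/minsetP; split => // B' zB' sB'B; apply/eqP; rewrite eqEsubset sB'B /=.
apply/subsetP=> b bB; have [F [fF [bF HF]]] := H b bB.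
have [x xF xB'] := zf_meet zB' fF.
case: (eqVneq x b) => [<- //|xb].
by move: (HF x (subsetP sB'B x xB') xb); rewrite xF.
Qed.

Lemma ZIrP S : reflect (forall x, x \in S -> exists F, fort e F /\ x \in F /\
   (forall y, y \in S -> y != x -> y \notin F)) (ZIr_set e S).
Proof.
apply: (iffP forall_inP) => H x xS; have := H x xS.
  case/existsP=> F /andP[fF /eqP SF]; exists F; split => //; split.
    have : x \in S :&: F by rewrite SF inE.
    by rewrite inE => /andP[].
  move=> y yS yx; apply/negP=> yF.
  have : y \in S :&: F by rewrite inE yS yF.
  by rewrite SF inE (negbTE yx).
case=> F [fF [xF HF]]; apply/existsP; exists F; rewrite /private_fort fF /=.
apply/eqP/setP=> y; rewrite !inE; apply/andP/eqP => [[yS yF]|->]; last by [].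
by apply/eqP; apply: contraLR yF => yx; exact: HF.
Qed.

Lemma ZIr_sub A B : ZIr_set e B -> A \subset B -> ZIr_set e A.
Proof.
move=> /ZIrP H sAB; apply/ZIrP=> x xA.
have [F [fF [xF HF]]] := H x (subsetP sAB x xA).
exists F; split => //; split => // y yA; exact: HF (subsetP sAB y yA).
Qed.

End Gen.

Lemma bigmin_le_seq (I : eqType) (l : seq I) (P : pred I) (f : I -> nat) N i0 :
  i0 \in l -> P i0 -> \big[minn/N]_(i <- l | P i) f i <= f i0.
Proof.
elim: l => // a l IH; rewrite inE big_cons => /orP[/eqP <-|il] Pi.
  by rewrite Pi geq_minl.
case: (P a); last exact: IH.
exact: leq_trans (geq_minr _ _) (IH il Pi).
Qed.

Lemma bigmin_eq (I : finType) (P : pred I) (f : I -> nat) N m :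
  m <= N -> (exists2 i, P i & f i = m) -> (forall i, P i -> m <= f i) ->
  \big[minn/N]_(i | P i) f i = m.
Proof.
move=> mN [i0 Pi0 fi0] H; apply/eqP; rewrite eqn_leq; apply/andP; split.
  by rewrite -fi0; apply: bigmin_le_seq => //; rewrite mem_index_enum.
elim/big_ind: _ => [//|a b ha hb|i Pi]; [by rewrite leq_min ha hb | exact: H].
Qed.

Lemma bigmax_eq (I : finType) (P : pred I) (f : I -> nat) m :
  (exists2 i, P i & f i = m) -> (forall i, P i -> f i <= m) ->
  \max_(i | P i) f i = m.
Proof.
move=> [i0 Pi0 fi0] H; apply/eqP; rewrite eqn_leq; apply/andP; split.
  elim/big_ind: _ => [//|a b ha hb|i Pi]; [by rewrite geq_max ha hb | exact: H].
by rewrite (bigD1 i0) //= fi0 leq_maxl.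
Qed.

Ltac clr := repeat match goal with
 | H : is_true (?a != ?b) |- _ => let T := type of a in assert_fails (unify T nat); clear H
 | H : is_true (_ \in _) |- _ => clear H
 | H : forall _, _ |- _ => clear H
 end.
Ltac lia := clr; Lia.lia.

Lemma count_range a b N : a <= b -> count (fun k => a <= k < b) (iota 0 N) = minn b N - minn a N.
Proof.
move=> ab; elim: N => [|N IH]; first by rewrite !minn0.
rewrite -addn1 iotaD count_cat IH /= add0n.
case h1: (a <= N); case h2: (N < b) => /=; lia.
Qed.
Lemma card_rangeI N a b : a <= b <= N -> #|[set x : 'I_N | a <= val x < b]| = b - a.
Proof.
move=> h; rewrite cardsE cardE /enum_mem size_filter -enumT /=.
rewrite -(count_map val (fun k => a <= k < b)) val_enum_ord count_range; lia.
Qed.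

Section H.
Variables r s : nat.
Hypotheses (hr : 2 <= r) (hs : 3 <= s) (hodd : odd s).
Local Notation V := 'I_(r+s+1).
Local Notation G := (H_adj r s).
Implicit Types (F B S : {set V}).

Lemma n_pos : 0 < r + s + 1. Proof. by rewrite addn1. Qed.
Definition vert (k : nat) : V := insubd (Ordinal n_pos) k.
Lemma val_vert k : k < r+s+1 -> nat_of_ord (vert k) = k.
Proof. by move=> h; rewrite val_insubd h. Qed.
Lemma vert_val (x : V) : vert (nat_of_ord x) = x.
Proof. by apply: ord_inj; rewrite val_vert // ltn_ord. Qed.
Lemma adjE (x y : V) : G x y = H_adj_nat r s x y. Proof. by []. Qed.
Lemma eq_vert (x : V) k : k < r+s+1 -> (x == vert k) = (nat_of_ord x == k).
Proof.
move=> hk; apply/eqP/eqP => [->|<-]; [exact: val_vert | by rewrite vert_val].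
Qed.

Lemma eq_vertl (x : V) k : k < r+s+1 -> (vert k == x) = (nat_of_ord x == k).
Proof. by move=> hk; rewrite eq_sym eq_vert. Qed.

Definition out F k := vert k \notin F.

Lemma rule F a b : fort G F -> a < r+s+1 -> b < r+s+1 -> out F a ->
  H_adj_nat r s a b ->
  (forall c, c < r+s+1 -> H_adj_nat r s a c -> c != b -> out F c) -> out F b.
Proof.
move=> fF ha hb aF ab H; apply: (fort_rule fF aF); first by rewrite adjE !val_vert.
move=> x; rewrite adjE val_vert // => ax xb.
rewrite /out -(vert_val x); apply: (H (nat_of_ord x)) => //.
by rewrite -eq_vert.
Qed.

Definition outW F i := forall k, 1 <= k <= r -> k != i -> out F k.
Definition outY F := forall j, 1 <= j <= s -> out F (r + j).

Ltac adjt := rewrite /H_adj_nat /=; lia.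

Lemma R_u F i : fort G F -> 1 <= i <= r -> out F 0 -> outW F i -> out F i.
Proof.
move=> fF hi o0 oW; apply: (@rule F 0 i fF) => //; try lia; first adjt.
move=> c hc ac ci; apply: oW => //; move: ac; adjt.
Qed.

Lemma R_w F k : fort G F -> 1 <= k <= r -> out F k -> out F (r+s) -> out F 0.
Proof.
move=> fF hk ok os; apply: (@rule F k 0 fF) => //; try lia; first adjt.
move=> c hc ac c0; have -> : c = r + s by move: ac; adjt.
done.
Qed.

Lemma R_w' F k : fort G F -> 1 <= k <= r -> out F k -> out F 0 -> out F (r+s).
Proof.
move=> fF hk ok o0; apply: (@rule F k (r+s) fF) => //; try lia; first adjt.
move=> c hc ac c0; have -> : c = 0 by move: ac; adjt.
done.
Qed.

Lemma R_ua F : fort G F -> out F (r+s) -> outW F 0 -> out F (r+s-1).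
Proof.
move=> fF os oW; apply: (@rule F (r+s) (r+s-1) fF) => //; try lia; first adjt.
move=> c hc ac c0; apply: oW; move: ac c0; adjt.
Qed.

Lemma R_ub F i : fort G F -> 1 <= i <= r -> out F (r+s) -> out F (r+s-1) -> outW F i -> out F i.
Proof.
move=> fF hi os os1 oW; apply: (@rule F (r+s) i fF) => //; try lia; first adjt.
move=> c hc ac ci.
have [->|ne] := eqVneq c (r+s-1); first done.
apply: oW => //; move: ac ne; adjt.
Qed.

Lemma R_y1 F : fort G F -> out F (r+1) -> out F (r+2).
Proof.
move=> fF o1; apply: (@rule F (r+1) (r+2) fF) => //; try lia; first adjt.
move=> c hc ac c2; move: ac c2; adjt.
Qed.

Lemma R_up F j : fort G F -> 2 <= j <= s - 1 -> out F (r+j) -> out F (r+j-1) -> out F (r+j+1).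
Proof.
move=> fF hj o1 o2; apply: (@rule F (r+j) (r+j+1) fF) => //; try lia; first adjt.
move=> c hc ac c2; have -> : c = r + j - 1 by move: ac c2; adjt.
done.
Qed.

Lemma R_down F j : fort G F -> 2 <= j <= s - 1 -> out F (r+j) -> out F (r+j+1) -> out F (r+j-1).
Proof.
move=> fF hj o1 o2; apply: (@rule F (r+j) (r+j-1) fF) => //; try lia; first adjt.
move=> c hc ac c2; have -> : c = r + j + 1 by move: ac c2; adjt.
done.
Qed.

Lemma pair_all F j : fort G F -> 1 <= j < s -> out F (r+j) -> out F (r+j+1) -> outY F.
Proof.
move=> fF hj o1 o2.
have up : forall m k, j <= k <= j + 1 + m -> k <= s -> out F (r + k).
  elim=> [|m IH] k hk ks.
    have [->|->] : k = j \/ k = j + 1 by lia.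
    - done.
    - by rewrite addnA.
  have [lt|eq] : k <= j + 1 + m \/ k = j + 2 + m by lia.
    apply: IH; lia.
  have := @R_up F (j + 1 + m) fF.
  have -> : r + (j + 1 + m) + 1 = r + k by lia.
  have -> : r + (j + 1 + m) - 1 = r + (j + m) by lia.
  move=> H; apply: H; first lia.
  - apply: IH; lia.
  - apply: IH; lia.
have down : forall m k, 1 <= k -> j - m <= k <= j + 1 -> out F (r + k).
  elim=> [|m IH] k hk1 hk.
    apply: (up 0 k); lia.
  have [lt|eq] : j - m <= k \/ k = j - m - 1 by lia.
    apply: IH; lia.
  have := @R_down F (k + 1) fF.
  have -> : r + (k + 1) - 1 = r + k by lia.
  move=> H; apply: H; first lia.
  - apply: IH; lia.
  - have -> : r + (k + 1) + 1 = r + (k + 2) by lia.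
    apply: IH; lia.
move=> k hk.
have [h1|h2] : j <= k \/ k < j by lia.
  apply: (up s k); lia.
apply: (down j k); lia.
Qed.

Lemma y1_all F : fort G F -> out F (r+1) -> outY F.
Proof.
move=> fF o1; apply: (@pair_all F 1 fF) => //; first lia.
by rewrite -addnA; apply: R_y1.
Qed.

Lemma all_out F : fort G F -> (forall k, k < r+s+1 -> out F k) -> False.
Proof.
move=> fF H; move: (fort_neq0 fF); case/set0Pn=> x xF.
by move: (H _ (ltn_ord x)); rewrite /out vert_val xF.
Qed.

Lemma all_out' F : fort G F -> out F 0 -> outW F 0 -> outY F -> False.
Proof.
move=> fF o0 oW oY; apply: (all_out fF) => k hk.
have [->|[h1|h2]] : k = 0 \/ (1 <= k <= r) \/ (r < k) by lia.
- done.
- apply: oW; lia.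
- have -> : k = r + (k - r) by lia.
  apply: oY; lia.
Qed.

Lemma outW_add F i : 1 <= i <= r -> outW F i -> out F i -> outW F 0.
Proof. move=> hi oW oi k hk _; have [->|ne] := eqVneq k i; [done | exact: oW]. Qed.

Lemma C_Y F i : fort G F -> 1 <= i <= r -> outY F -> outW F i -> False.
Proof.
move=> fF hi oY oW.
have os : out F (r+s) by apply: oY; lia.
have os1 : out F (r+s-1).
  have -> : r + s - 1 = r + (s - 1) by lia.
  apply: oY; lia.
have oi := R_ub fF hi os os1 oW.
have oW0 := outW_add hi oW oi.
have o0 : out F 0 by apply: (@R_w F 1 fF) => //; [lia | apply: oW0; lia].
exact: all_out' fF o0 oW0 oY.
Qed.

Lemma C_u F i : fort G F -> 1 <= i <= r -> out F 0 -> outW F i -> False.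
Proof.
move=> fF hi o0 oW.
have oW0 := outW_add hi oW (R_u fF hi o0 oW).
have os : out F (r+s) by apply: (@R_w' F 1 fF) => //; [lia | apply: oW0; lia].
have os1 := R_ua fF os oW0.
have oY : outY F.
  apply: (@pair_all F (s-1) fF); first lia.
  - by have <- : r + s - 1 = r + (s - 1) by lia.
  - by have -> : r + (s - 1) + 1 = r + s by lia.
exact: all_out' fF o0 oW0 oY.
Qed.

Lemma C_ys F i : fort G F -> 1 <= i <= r -> out F (r+s) -> outW F i -> False.
Proof.
move=> fF hi os oW.
have o0 : out F 0.
  pose k := if i == 1 then 2 else 1.
  have hk : 1 <= k <= r by rewrite /k; case: ifP => /eqP; lia.
  have hki : k != i by rewrite /k; case: ifP => /eqP; lia.
  exact: (@R_w F k fF hk (oW k hk hki) os).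
exact: C_u fF hi o0 oW.
Qed.

Ltac vt := rewrite ?inE ?val_vert ?adjE /H_adj_nat /=; try lia.

Definition Wset : {set V} := [set x : V | 1 <= nat_of_ord x < r.+1].
Lemma card_W : #|Wset| = r.
Proof. rewrite card_rangeI; lia. Qed.
Definition Wm i : {set V} := Wset :\ vert i.
Lemma card_Wm i : 1 <= i <= r -> #|Wm i| = r - 1.
Proof.
move=> hi; have iW : vert i \in Wset by vt.
have := cardsD1 (vert i) Wset; rewrite card_W iW /= /Wm; move: (#|_ :\ _|) => c; lia.
Qed.
Lemma in_Wm i (x : V) : i < r+s+1 -> (x \in Wm i) = (nat_of_ord x != i) && (1 <= nat_of_ord x <= r).
Proof. move=> hi; rewrite !inE eq_vert //; congr (_ && _); lia. Qed.

Lemma pick2 F (v : V) a b : a < r+s+1 -> b < r+s+1 -> a != b ->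
  vert a \in F -> vert b \in F -> H_adj_nat r s (nat_of_ord v) a -> H_adj_nat r s (nat_of_ord v) b ->
  exists a' b', [/\ a' \in F, b' \in F, a' != b', G v a' & G v b'].
Proof.
move=> ha hb ab aF bF va vb; exists (vert a), (vert b).
by rewrite !adjE !val_vert // eq_vert // val_vert.
Qed.

Definition F0 : {set V} := [set x : V | (nat_of_ord x == 0) || (r < nat_of_ord x) && odd (nat_of_ord x - r)].

Lemma F0_dom v : v \notin F0 -> exists a b, [/\ a \in F0, b \in F0, a != b, G v a & G v b].
Proof.
rewrite inE => hv; have hvn := ltn_ord v.
case: (leqP (nat_of_ord v) r) => hvr.
  apply: (@pick2 F0 v 0 (r+s)); vt.
apply: (@pick2 F0 v (nat_of_ord v - 1) (nat_of_ord v + 1)); vt.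
Qed.

Lemma fort_F0sup F : F0 \subset F -> fort G F.
Proof.
move=> sF; apply: (fort_sup (F := F0)) => //.
  by apply/set0Pn; exists (vert 0); vt.
move=> v vF; apply: F0_dom; apply: contra vF; exact: (subsetP sF).
Qed.

Lemma fort_F0 : fort G F0.
Proof. exact: fort_F0sup. Qed.

Lemma fort_ww (a b : V) : a \in Wset -> b \in Wset -> a != b -> fort G [set a; b].
Proof.
rewrite !inE => ha hb ab; apply: fortI; first by apply/set0Pn; exists a; rewrite !inE eqxx.
move=> v; rewrite !inE negb_or => /andP[va vb].
have hvn := ltn_ord v.
case: (boolP ((nat_of_ord v == 0) || (nat_of_ord v == r + s))) => hv.
  right; exists a, b; rewrite !inE !eqxx orbT ab !adjE; split => //; vt.
left=> x; rewrite adjE !inE => vx; apply/negP => /orP[/eqP E|/eqP E]; subst x; move: vx; vt.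
Qed.

Definition FuW : {set V} := [set x : V | nat_of_ord x < r.+1].
Lemma fort_FuW : fort G FuW.
Proof.
apply: fortI; first by apply/set0Pn; exists (vert 0); vt.
move=> v; rewrite inE -leqNgt => hv; have hvn := ltn_ord v.
case: (eqVneq (nat_of_ord v) (r + s)) => hs'.
  right; apply: (@pick2 FuW v 1 2); vt.
left=> x; rewrite adjE inE => vx; have := ltn_ord x; move: vx; vt.
Qed.

Definition Fnot : {set V} := [set x : V | 0 < nat_of_ord x < r + s].
Lemma fort_Fnot : fort G Fnot.
Proof.
apply: (fort_sup (F := Fnot)) => //; first by apply/set0Pn; exists (vert 1); vt.
move=> v; rewrite inE => hv; have hvn := ltn_ord v.
apply: (@pick2 Fnot v 1 2); vt.
Qed.

Definition FuY : {set V} := [set x : V | (nat_of_ord x == 0) || (r < nat_of_ord x)].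
Lemma fort_FuY : fort G FuY.
Proof. apply: fort_F0sup; apply/subsetP=> x; rewrite !inE; lia. Qed.

Definition Feven : {set V} := [set x : V | [|| nat_of_ord x == 0, nat_of_ord x == r+1, nat_of_ord x == r+s |
   (r+1 < nat_of_ord x < r+s) && ~~ odd (nat_of_ord x - r)]].
Lemma fort_Feven : fort G Feven.
Proof.
apply: (fort_sup (F := Feven)) => //; first by apply/set0Pn; exists (vert 0); vt.
move=> v; rewrite inE => hv; have hvn := ltn_ord v.
case: (leqP (nat_of_ord v) r) => hvr.
  apply: (@pick2 Feven v 0 (r+s)); vt.
apply: (@pick2 Feven v (nat_of_ord v - 1) (nat_of_ord v + 1)); vt.
Qed.

Lemma fort_compl B : vert 0 \notin B ->
  (forall j, 1 <= j < s -> vert (r+j) \in B -> vert (r+j+1) \notin B) ->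
  vert (r+1) \notin B -> vert (r+s) \notin B -> fort G (~: B).
Proof.
move=> u0 nc y1 ys; apply: (fort_sup (F := ~: B)) => //.
  by apply/set0Pn; exists (vert 0); rewrite inE.
move=> v; rewrite inE negbK => vB; have hvn := ltn_ord v.
have v0 : nat_of_ord v != 0.
  apply: contraNneq u0 => E; have h : vert (nat_of_ord v) \in B by rewrite vert_val.
  by rewrite E in h.
have vs : nat_of_ord v != r + s.
  apply: contraNneq ys => E; have h : vert (nat_of_ord v) \in B by rewrite vert_val.
  by rewrite E in h.
have v1 : nat_of_ord v != r + 1.
  apply: contraNneq y1 => E; have h : vert (nat_of_ord v) \in B by rewrite vert_val.
  by rewrite E in h.
case: (leqP (nat_of_ord v) r) => hvr.
  apply: (@pick2 (~: B) v 0 (r+s)); rewrite ?inE //; vt.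
set j := nat_of_ord v - r.
have ev : v = vert (r + j) by apply: ord_inj; rewrite val_vert; lia.
rewrite ev in vB.
apply: (@pick2 (~: B) v (r + j - 1) (r + j + 1)); rewrite ?inE; try vt.
- apply/negP => h.
  have e1 : vert (r + j - 1) = vert (r + (j - 1)) by congr vert; lia.
  have e2 : vert (r + (j - 1) + 1) = vert (r + j) by congr vert; lia.
  have hj : 1 <= j - 1 < s by lia.
  rewrite e1 in h; have := nc (j - 1) hj h; by rewrite e2 vB.
- apply: nc vB; lia.
Qed.

Lemma disj_out F B x : F :&: B = set0 -> x \in B -> x \notin F.
Proof.
move=> FB xB; apply/negP=> xF; have : x \in F :&: B by rewrite inE xF xB.
by rewrite FB inE.
Qed.

Lemma outW_of F B i : F :&: B = set0 -> 1 <= i <= r -> Wm i \subset B -> outW F i.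
Proof.
move=> FB hi sW k hk ki; rewrite /out; apply: (disj_out FB); apply: (subsetP sW).
rewrite in_Wm; last lia.
rewrite val_vert; lia.
Qed.

Lemma ZF_u i : 1 <= i <= r -> zero_forcing_set G (vert 0 |: Wm i).
Proof.
move=> hi; apply/zfP => F fF; apply/negP => /eqP FB.
have oW := outW_of FB hi (subsetUr _ _).
exact: C_u fF hi (disj_out FB (setU11 _ _)) oW.
Qed.

Lemma ZF_ys i : 1 <= i <= r -> zero_forcing_set G (vert (r+s) |: Wm i).
Proof.
move=> hi; apply/zfP => F fF; apply/negP => /eqP FB.
have oW := outW_of FB hi (subsetUr _ _).
exact: C_ys fF hi (disj_out FB (setU11 _ _)) oW.
Qed.

Lemma ZF_y1 i : 1 <= i <= r -> zero_forcing_set G (vert (r+1) |: Wm i).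
Proof.
move=> hi; apply/zfP => F fF; apply/negP => /eqP FB.
have oW := outW_of FB hi (subsetUr _ _).
exact: C_Y fF hi (y1_all fF (disj_out FB (setU11 _ _))) oW.
Qed.

Lemma ZF_pair i j : 1 <= i <= r -> 1 <= j < s ->
  zero_forcing_set G (vert (r+j) |: (vert (r+j+1) |: Wm i)).
Proof.
move=> hi hj; apply/zfP => F fF; apply/negP => /eqP FB.
have sW : Wm i \subset vert (r+j) |: (vert (r+j+1) |: Wm i).
  by apply: subset_trans (subsetUr _ _) (subsetUr _ _).
have oW := outW_of FB hi sW.
have o1 : out F (r+j) by apply: (disj_out FB); rewrite !inE eqxx.
have o2 : out F (r+j+1) by apply: (disj_out FB); rewrite !inE eqxx orbT.
exact: C_Y fF hi (pair_all fF hj o1 o2) oW.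
Qed.

Lemma W_miss B : zero_forcing_set G B -> exists i, 1 <= i <= r /\ Wm i \subset B.
Proof.
move=> zB; case: (boolP (Wset \subset B)) => sub.
  exists 1; split; first lia.
  exact: subset_trans (subD1set _ _) sub.
case/subsetPn: sub => w wW wB; exists (nat_of_ord w); split.
  by move: wW; rewrite inE; lia.
apply/subsetP=> x; rewrite in_Wm; last exact: ltn_ord.
move=> hx; apply/negPn/negP => xB.
have xW : x \in Wset by rewrite inE; lia.
have xw : x != w by apply: contraNneq (proj1 (andP hx)) => ->.
have [y] := zf_meet zB (fort_ww xW wW xw).
by rewrite !inE => /orP[/eqP ->|/eqP ->]; [rewrite (negbTE xB) | rewrite (negbTE wB)].
Qed.

Lemma F0W x : x \in F0 -> 1 <= nat_of_ord x <= r -> False.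
Proof. rewrite inE; lia. Qed.

Lemma Zf_lower B : zero_forcing_set G B -> r <= #|B|.
Proof.
move=> zB; have [i [hi sW]] := W_miss zB.
have [z zF zB'] := zf_meet zB fort_F0.
have zW : z \notin Wm i.
  rewrite in_Wm; last lia.
  apply/negP => /andP[_ h]; exact: F0W zF h.
have : #|z |: Wm i| <= #|B|.
  apply: subset_leq_card; apply/subsetP=> x; rewrite !inE.
  case/orP=> [/eqP -> //|h]; apply: (subsetP sW); by rewrite /Wm !inE.
rewrite cardsU1 zW card_Wm //; lia.
Qed.

Lemma card_uW i a : 1 <= i <= r -> a < r+s+1 -> (a == 0) || (r < a) ->
  #|vert a |: Wm i| = r.
Proof.
move=> hi ha h; have h0 : vert a \notin Wm i.
  rewrite in_Wm; last lia.
  rewrite val_vert; lia.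
rewrite cardsU1 h0 card_Wm //; lia.
Qed.

Lemma Zf_eq : Zf G = r.
Proof.
rewrite /Zf; apply: bigmin_eq.
- rewrite card_ord; lia.
- exists (vert 0 |: Wm r); first by apply: ZF_u; lia.
  apply: card_uW; lia.
- exact: Zf_lower.
Qed.

Lemma vert_neq a b : a < r+s+1 -> b < r+s+1 -> a != b -> vert a != vert b.
Proof. by move=> ha hb ab; rewrite eq_vert // val_vert. Qed.

Lemma priv S x : ZIr_set G S -> x \in S -> exists F, [/\ fort G F, x \in F &
   forall k, k < r+s+1 -> vert k \in S -> vert k != x -> out F k].
Proof.
move/ZIrP => H xS; have [F [fF [xF HF]]] := H x xS.
by exists F; split => // k hk kS kx; apply: HF.
Qed.

Lemma P5 S : ZIr_set G S -> Wset \subset S -> vert 0 \in S -> False.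
Proof.
move=> zS sW uS; have w1 : vert 1 \in S by apply: (subsetP sW); vt.
have [F [fF xF HF]] := priv zS w1.
apply: (@C_u F 1 fF); first lia.
- apply: HF => //; try lia; apply: (@vert_neq 0 1); lia.
- move=> k hk k1; apply: HF; try lia.
  + by apply: (subsetP sW); vt.
  + apply: (@vert_neq k 1); lia.
Qed.

Definition Lo : {set V} := [set x : V | 0 <= nat_of_ord x < r.+1].
Lemma card_Lo : #|Lo| = r.+1.
Proof. rewrite card_rangeI; lia. Qed.

Lemma ZIR_Lo S : ZIr_set G S -> #|S :&: Lo| <= r.
Proof.
move=> zS; case: (boolP (vert 0 \in S)) => uS.
  case: (boolP (Wset \subset S)) => sW; first by case: (P5 zS sW uS).
  case/subsetPn: sW => w wW wS.
  have : #|S :&: Lo| <= #|Lo :\ w|.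
    apply: subset_leq_card; apply/subsetP => x; rewrite !inE => /andP[xS xL].
    by rewrite xL andbT; apply: contraNneq wS => <-.
  have wL : w \in Lo by move: wW; rewrite !inE; lia.
  have := cardsD1 w Lo; rewrite wL card_Lo.
  move: (#|Lo :\ w|) (#|S :&: Lo|) => a b; lia.
have : #|S :&: Lo| <= #|Wset|.
  apply: subset_leq_card; apply/subsetP => x; rewrite !inE => /andP[xS xL].
  suff : nat_of_ord x != 0 by lia.
  apply: contraNneq uS => E; have h : vert (nat_of_ord x) \in S by rewrite vert_val.
  by rewrite E in h.
by rewrite card_W.
Qed.

Section Pair.
Variables (S : {set V}) (j : nat).
Hypotheses (zS : ZIr_set G S) (hj : 1 <= j < s)
  (p1 : vert (r+j) \in S) (p2 : vert (r+j+1) \in S).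

Lemma pairY x F : fort G F -> x != vert (r+j) -> x != vert (r+j+1) ->
  (forall k, k < r+s+1 -> vert k \in S -> vert k != x -> out F k) -> outY F.
Proof.
move=> fF x1 x2 HF; apply: (pair_all fF hj).
- apply: HF => //; [lia | by rewrite eq_sym].
- apply: HF => //; [lia | by rewrite eq_sym].
Qed.

Lemma pair_Lo : #|S :&: Lo| <= r - 1.
Proof.
case: (boolP [exists w in Wset, w \in S]) => hw.
  case/existsP: hw => w /andP[wW wS].
  have wp1 : w != vert (r+j) by rewrite eq_vert; [move: wW; rewrite inE|]; lia.
  have wp2 : w != vert (r+j+1) by rewrite eq_vert; [move: wW; rewrite inE|]; lia.
  have uS : vert 0 \notin S.
    apply/negP => uS; have [F [fF uF HF]] := priv zS uS.
    have u1 : vert 0 != vert (r+j) by apply: (@vert_neq 0 (r+j)); lia.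
    have u2 : vert 0 != vert (r+j+1) by apply: (@vert_neq 0 (r+j+1)); lia.
    have oY := pairY fF u1 u2 HF.
    have ow : out F (nat_of_ord w).
      apply: HF; [exact: ltn_ord | by rewrite vert_val | ].
      rewrite vert_val eq_sym; apply/negP => /eqP E; move: wW; rewrite inE -E val_vert; lia.
    have os : out F (r+s) by apply: oY; lia.
    have : out F 0.
      by apply: (@R_w F (nat_of_ord w) fF) => //; move: wW; rewrite inE.
    by rewrite /out uF.
  case: (boolP (Wset \subset S)) => sW.
    have w1 : vert 1 \in S by apply: (subsetP sW); vt.
    have [F [fF wF HF]] := priv zS w1.
    have x1 : vert 1 != vert (r+j) by apply: (@vert_neq 1 (r+j)); lia.
    have x2 : vert 1 != vert (r+j+1) by apply: (@vert_neq 1 (r+j+1)); lia.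
    have oY := pairY fF x1 x2 HF.
    exfalso; apply: (@C_Y F 1 fF _ oY); first lia.
    move=> k hk k1; apply: HF; try lia.
    + by apply: (subsetP sW); vt.
    + apply: (@vert_neq k 1); lia.
  case/subsetPn: sW => w' wW' wS'.
  have : #|S :&: Lo| <= #|Wset :\ w'|.
    apply: subset_leq_card; apply/subsetP => x; rewrite !inE => /andP[xS xL].
    have x0 : nat_of_ord x != 0.
      apply: contraNneq uS => E; have h : vert (nat_of_ord x) \in S by rewrite vert_val.
      by rewrite E in h.
    have -> : x != w' by apply: contraNneq wS' => <-.
    lia.
  have := cardsD1 w' Wset; rewrite wW' card_W.
  move: (#|Wset :\ w'|) (#|S :&: Lo|) => a b; lia.
have : #|S :&: Lo| <= #|[set vert 0]|.
  apply: subset_leq_card; apply/subsetP => x; rewrite !inE => /andP[xS xL].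
  rewrite eq_vert; last lia.
  apply/negPn/negP => x0; move/existsP: hw; apply; exists x; rewrite xS andbT inE; lia.
rewrite cards1; lia.
Qed.

Lemma pair_Y : #|S :\: Lo| <= 2.
Proof.
have : #|S :\: Lo| <= #|[set vert (r+j); vert (r+j+1)]|.
  apply: subset_leq_card; apply/subsetP => x; rewrite !inE => /andP[xL xS].
  apply/negPn/negP; rewrite negb_or => /andP[x1 x2].
  have [F [fF xF HF]] := priv zS xS.
  have oY := pairY fF x1 x2 HF.
  have : out F (r + (nat_of_ord x - r)) by apply: oY; have := ltn_ord x; lia.
  have -> : r + (nat_of_ord x - r) = nat_of_ord x by lia.
  by rewrite /out vert_val xF.
move=> h; apply: leq_trans h _; rewrite cards2; by case: (_ != _).
Qed.

End Pair.

Lemma y1_Y S : ZIr_set G S -> vert (r+1) \in S -> #|S :\: Lo| <= 1.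
Proof.
move=> zS y1S.
have : #|S :\: Lo| <= #|[set vert (r+1)]|.
  apply: subset_leq_card; apply/subsetP => x; rewrite !inE => /andP[xL xS].
  apply/negPn/negP => x1.
  have [F [fF xF HF]] := priv zS xS.
  have o1 : out F (r+1) by apply: HF => //; [lia | rewrite eq_sym].
  have oY := y1_all fF o1.
  have : out F (r + (nat_of_ord x - r)) by apply: oY; have := ltn_ord x; lia.
  have -> : r + (nat_of_ord x - r) = nat_of_ord x by lia.
  by rewrite /out vert_val xF.
by rewrite cards1.
Qed.

Lemma gen_Y S : vert (r+1) \notin S ->
  (forall j, 1 <= j < s -> vert (r+j) \in S -> vert (r+j+1) \notin S) ->
  #|S :\: Lo| <= (s - 1) %/ 2.
Proof.
move=> y1S nc.
pose f (x : V) := vert ((nat_of_ord x - r - 2) %/ 2).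
have inj : {in S :\: Lo &, injective f}.
  move=> x y; rewrite /Lo !inE => /andP[xL xS] /andP[yL yS] E.
  have hx := ltn_ord x; have hy := ltn_ord y.
  have x1 : nat_of_ord x != r + 1.
    apply: contraNneq y1S => E1; have h : vert (nat_of_ord x) \in S by rewrite vert_val.
    by rewrite E1 in h.
  have y1 : nat_of_ord y != r + 1.
    apply: contraNneq y1S => E1; have h : vert (nat_of_ord y) \in S by rewrite vert_val.
    by rewrite E1 in h.
  have E' : (nat_of_ord x - r - 2) %/ 2 = (nat_of_ord y - r - 2) %/ 2.
    have := congr1 (@nat_of_ord _) E; rewrite /f !val_vert //; lia.
  have cons : forall a b : V, a \in S -> b \in S -> r < nat_of_ord a ->
      nat_of_ord b = nat_of_ord a + 1 -> False.
    move=> a b aS bS ha hb.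
    have hk : 1 <= nat_of_ord a - r < s by have := ltn_ord b; lia.
    have := nc _ hk.
    have -> : r + (nat_of_ord a - r) = nat_of_ord a by lia.
    have -> : nat_of_ord a + 1 = nat_of_ord b by lia.
    by rewrite !vert_val aS bS => /(_ isT).
  apply: ord_inj.
  have [lt|[eq|gt]] : nat_of_ord x + 1 = nat_of_ord y \/ nat_of_ord x = nat_of_ord y
     \/ nat_of_ord y + 1 = nat_of_ord x by lia.
  - by case: (cons x y xS yS); lia.
  - done.
  - by case: (cons y x yS xS); lia.
have : #|f @: (S :\: Lo)| <= #|[set t : V | 0 <= nat_of_ord t < (s - 1) %/ 2]|.
  apply: subset_leq_card; apply/subsetP => t /imsetP[x]; rewrite /Lo !inE => /andP[xL xS] ->.
  have hx := ltn_ord x; rewrite /f val_vert; lia.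
rewrite card_in_imset // card_rangeI; last lia.
by rewrite subn0.
Qed.

Lemma ZIR_upper S : ZIr_set G S -> #|S| <= r + (s - 1) %/ 2.
Proof.
move=> zS; have hc := cardsID Lo S.
have hL := ZIR_Lo zS.
case: (boolP [exists j : 'I_s, [&& 1 <= nat_of_ord j, vert (r + j) \in S & vert (r+j+1) \in S]]).
  case/existsP => j /and3P[hj p1 p2].
  have hj' : 1 <= j < s by rewrite hj ltn_ord.
  have := pair_Lo zS hj' p1 p2; have := pair_Y zS hj' p1 p2.
  rewrite -hc; move: (#|S :&: Lo|) (#|S :\: Lo|) => a b; lia.
move=> hnp.
have nc : forall j, 1 <= j < s -> vert (r+j) \in S -> vert (r+j+1) \notin S.
  move=> j hj p1; apply/negP => p2; move/existsP: hnp; apply.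
  by exists (Ordinal (proj2 (andP hj))); rewrite /= p1 p2 (proj1 (andP hj)).
case: (boolP (vert (r+1) \in S)) => y1S.
  have := y1_Y zS y1S; move: hL; rewrite -hc; move: (#|S :&: Lo|) (#|S :\: Lo|) => a b; lia.
have := gen_Y y1S nc; move: hL; rewrite -hc; move: (#|S :&: Lo|) (#|S :\: Lo|) => a b; lia.
Qed.

Definition Ev : {set V} :=
  [set vert (r + 2 * nat_of_ord t + 2) | t in [set t : V | 0 <= nat_of_ord t < (s-1) %/ 2]].
Definition Sst : {set V} := Wset :|: Ev.

Lemma Ev_val x : x \in Ev -> r + 2 <= nat_of_ord x /\ ~~ odd (nat_of_ord x - r).
Proof.
case/imsetP => t; rewrite inE => ht ->; have := ltn_ord t.
rewrite val_vert; lia.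
Qed.

Lemma Sst_F0 x : x \in Sst -> x \notin F0.
Proof.
rewrite inE => /orP[xW|xE].
  by move: xW; rewrite !inE; lia.
have [h1 h2] := Ev_val xE; rewrite inE; lia.
Qed.

Lemma card_Ev : #|Ev| = (s - 1) %/ 2.
Proof.
rewrite card_in_imset.
  rewrite card_rangeI; lia.
move=> a b; rewrite !inE => ha hb E.
have := congr1 (@nat_of_ord _) E; rewrite !val_vert; try lia.
move=> h; apply: ord_inj; lia.
Qed.

Lemma card_Sst : #|Sst| = r + (s - 1) %/ 2.
Proof.
rewrite /Sst cardsU.
have -> : Wset :&: Ev = set0.
  apply/setP => x; rewrite inE [x \in set0]inE; apply/negbTE/negP => /andP[xW xE].
  have [h1 h2] := Ev_val xE; move: xW; rewrite inE; lia.
by rewrite cards0 subn0 card_W card_Ev.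
Qed.

Lemma ZIr_Sst : ZIr_set G Sst.
Proof.
apply/ZIrP => x xS; exists (x |: F0); split.
  by apply: fort_F0sup; apply: subsetUr.
split; first by rewrite !inE eqxx.
move=> y yS yx; rewrite in_setU1 negb_or yx /=.
exact: Sst_F0.
Qed.

Lemma ZIR_eq : ZIR G = r + (s - 1) %/ 2.
Proof.
rewrite /ZIR; apply: bigmax_eq.
  exists Sst; last exact: card_Sst.
  apply/maxsetP; split; first exact: ZIr_Sst.
  move=> B zB sSB; apply/eqP; rewrite eq_sym eqEcard sSB /= card_Sst.
  exact: ZIR_upper.
by move=> S /maxsetP[zS _]; apply: ZIR_upper.
Qed.

Lemma ZIr2 (a b : V) Fa Fb : a != b -> fort G Fa -> a \in Fa -> b \notin Fa ->
  fort G Fb -> b \in Fb -> a \notin Fb -> ZIr_set G [set a; b].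
Proof.
move=> ab fa aa ba fb bb ab'; apply/ZIrP => x; rewrite !inE => /orP[/eqP ->|/eqP ->].
  exists Fa; split => //; split => // y; rewrite !inE => /orP[/eqP ->|/eqP -> _] //.
  by rewrite eqxx.
exists Fb; split => //; split => // y; rewrite !inE => /orP[/eqP -> _|/eqP ->] //.
by rewrite eqxx.
Qed.

Definition S2 : {set V} := [set vert 0; vert (r+1)].

Lemma ZIr_S2 : ZIr_set G S2.
Proof.
apply: (@ZIr2 _ _ FuW Fnot).
- apply: (@vert_neq 0 (r+1)); lia.
- exact: fort_FuW.
- vt.
- vt.
- exact: fort_Fnot.
- vt.
- vt.
Qed.

Lemma max_S2 : maxset (ZIr_set G) S2.
Proof.
apply/maxsetP; split; first exact: ZIr_S2.
move=> B zB sSB; apply/eqP; rewrite eqEsubset sSB andbT.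
have uB : vert 0 \in B by apply: (subsetP sSB); rewrite !inE eqxx.
have yB : vert (r+1) \in B by apply: (subsetP sSB); rewrite !inE eqxx orbT.
apply/subsetP => x xB; apply/negPn/negP; rewrite !inE negb_or !eq_vert; try lia.
move=> /andP[x0 x1]; have hx := ltn_ord x.
case: (leqP (nat_of_ord x) r) => hxr.
  have [F [fF uF HF]] := priv zB uB.
  have o1 : out F (r+1) by apply: HF => //; try lia; apply: (@vert_neq (r+1) 0); lia.
  have os : out F (r+s) by apply: (y1_all fF o1); lia.
  have ox : out F (nat_of_ord x).
    apply: HF; [lia | by rewrite vert_val | rewrite vert_val eq_vert //; lia].
  have : out F 0 by apply: (@R_w F (nat_of_ord x) fF) => //; lia.
  by rewrite /out uF.
have [F [fF xF HF]] := priv zB xB.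
have o1 : out F (r+1) by apply: HF => //; [lia | rewrite eq_sym eq_vert //; lia].
have : out F (r + (nat_of_ord x - r)) by apply: (y1_all fF o1); lia.
have -> : r + (nat_of_ord x - r) = nat_of_ord x by lia.
by rewrite /out vert_val xF.
Qed.

Lemma zir_lower S : maxset (ZIr_set G) S -> 2 <= #|S|.
Proof.
move=> /maxsetP[zS mS]; rewrite leqNgt; apply/negP => hS.
have [x sx] : exists x, S \subset [set x].
  case: (set_0Vmem S) => [->|[x xS]]; first by exists (vert 0); apply: sub0set.
  exists x; apply/subsetP => y yS; rewrite inE; apply/eqP.
  by move/card_le1_eqP: hS; apply.
have hx := ltn_ord x.
have [z [zx zZ]] : exists z, z != x /\ ZIr_set G [set x; z].
  case: (boolP (1 <= nat_of_ord x <= r)) => xW.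
    exists (vert 0); split; first by rewrite eq_vertl //; lia.
    pose w' := if nat_of_ord x == 1 then 2 else 1.
    have hw' : 1 <= w' <= r /\ w' != nat_of_ord x by rewrite /w'; case: ifP => /eqP; lia.
    have xW' : x \in Wset by rewrite inE; lia.
    have wW' : vert w' \in Wset by rewrite inE val_vert; lia.
    have xw' : x != vert w' by rewrite eq_vert; lia.
    apply: (@ZIr2 _ _ [set x; vert w'] F0).
    + by rewrite eq_vert //; lia.
    + exact: fort_ww.
    + by rewrite !inE eqxx.
    + rewrite !inE negb_or eq_vertl ?eq_vert ?val_vert; lia.
    + exact: fort_F0.
    + vt.
    + by rewrite inE; lia.
  exists (vert 1); split; first by rewrite eq_vertl //; lia.
  have w1 : vert 1 \in Wset by vt.
  have w2 : vert 2 \in Wset by vt.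
  apply: (@ZIr2 _ _ FuY [set vert 1; vert 2]).
  + by rewrite eq_vert //; lia.
  + exact: fort_FuY.
  + by rewrite inE; lia.
  + vt.
  + apply: fort_ww => //; apply: (@vert_neq 1 2); lia.
  + by rewrite !inE eqxx.
  + rewrite !inE !eq_vert; lia.
have := mS (z |: S).
have -> : ZIr_set G (z |: S).
  apply: (ZIr_sub zZ); apply/subsetP => y; rewrite !inE => /orP[->|yS]; first by rewrite orbT.
  by move: (subsetP sx y yS); rewrite inE => ->.
move=> /(_ isT (subsetUr _ _)) E.
have : z \in S by rewrite -E setU11.
move/(subsetP sx); rewrite inE => /eqP zx'; by rewrite zx' eqxx in zx.
Qed.

Lemma zir_eq : zir G = 2.
Proof.
rewrite /zir; apply: bigmin_eq.
- rewrite card_ord; lia.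
- exists S2; first exact: max_S2.
  rewrite /S2 cards2 eq_vert ?val_vert //; lia.
- exact: zir_lower.
Qed.

Lemma Zbar_upper B : minset (zero_forcing_set G) B ->
  #|B| <= r + 1 /\ (s = 3 -> #|B| <= r).
Proof.
move=> /minsetP[zB mB]; have [i [hi sW]] := W_miss zB.
have sub1 : forall a, vert a \in B -> vert a |: Wm i \subset B.
  by move=> a aB; rewrite subUset sub1set aB sW.
case: (boolP (vert 0 \in B)) => uB.
  rewrite -(mB _ (ZF_u hi) (sub1 _ uB)) card_uW //; lia.
case: (boolP (vert (r+1) \in B)) => y1B.
  rewrite -(mB _ (ZF_y1 hi) (sub1 _ y1B)) card_uW //; lia.
case: (boolP (vert (r+s) \in B)) => ysB.
  rewrite -(mB _ (ZF_ys hi) (sub1 _ ysB)) card_uW //; lia.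
case: (boolP [exists j : 'I_s, [&& 2 <= nat_of_ord j, nat_of_ord j <= s - 2,
     vert (r + j) \in B & vert (r+j+1) \in B]]).
  case/existsP => j /and4P[hj1 hj2 p1 p2].
  have hj : 1 <= j < s by lia.
  have sX : vert (r+j) |: (vert (r+j+1) |: Wm i) \subset B.
    by rewrite !subUset !sub1set p1 p2 sW.
  rewrite -(mB _ (ZF_pair hi hj) sX).
  have := cardsU1 (vert (r+j)) (vert (r+j+1) |: Wm i).
  have := cardsU1 (vert (r+j+1)) (Wm i).
  rewrite card_Wm //.
  move: (#|_ |: (_ |: _)|) (#|_ |: Wm i|) => a b.
  case: (_ \notin _); case: (_ \notin _) => /=; lia.
move=> hnp; exfalso.
have nc : forall j, 1 <= j < s -> vert (r+j) \in B -> vert (r+j+1) \notin B.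
  move=> j hj p1.
  have [e|[e|h]] : j = 1 \/ j = s - 1 \/ 2 <= j <= s - 2 by lia.
  - by subst j; rewrite p1 in y1B.
  - by have -> : r + j + 1 = r + s by lia.
  - apply/negP => p2; move/existsP: hnp; apply.
    by exists (Ordinal (proj2 (andP hj))); rewrite /= p1 p2; lia.
have [x] := zf_meet zB (fort_compl uB nc y1B ysB).
by rewrite inE => /negP.
Qed.

Lemma minZF_B5 : 5 <= s -> minset (zero_forcing_set G) (vert (r+2) |: (vert (r+2+1) |: Wm r)).
Proof.
move=> h5; apply: minZF_priv; first by apply: ZF_pair; lia.
move=> b; rewrite !in_setU1 => /orP[/eqP ->|/orP[/eqP ->|bW]].
- exists Feven; split; first exact: fort_Feven.
  split; first by vt.
  move=> y; rewrite !in_setU1 => /orP[/eqP ->|/orP[/eqP ->|yW]]; first by rewrite eqxx.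
    move=> _; vt.
  move=> _; move: yW; rewrite in_Wm; last lia.
  rewrite inE; lia.
- exists F0; split; first exact: fort_F0.
  split; first by vt.
  move=> y; rewrite !in_setU1 => /orP[/eqP ->|/orP[/eqP ->|yW]]; last first.
  + move=> _; move: yW; rewrite in_Wm; last lia.
    rewrite inE; lia.
  + by rewrite eqxx.
  + move=> _; vt.
- exists [set b; vert r]; split.
    apply: fort_ww.
    + by move: bW; rewrite in_Wm; [rewrite inE; lia | lia].
    + vt.
    + by move: bW; rewrite in_Wm; [rewrite eq_vert; lia | lia].
  split; first by rewrite !inE eqxx.
  move=> y yB yb; rewrite !inE negb_or yb /=.
  move: yB; rewrite !in_setU1 => /orP[/eqP ->|/orP[/eqP ->|yW]].
  + rewrite eq_vertl ?val_vert; lia.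
  + rewrite eq_vertl ?val_vert; lia.
  + by move: yW; rewrite in_Wm; [rewrite eq_vert; lia | lia].
Qed.

Lemma card_B5 : #|vert (r+2) |: (vert (r+2+1) |: Wm r)| = r + 1.
Proof.
rewrite cardsU1 cardsU1 card_Wm; last lia.
have -> : vert (r+2+1) \notin Wm r by rewrite in_Wm ?val_vert; lia.
have -> : vert (r+2) \notin vert (r+2+1) |: Wm r.
  by rewrite in_setU1 negb_or eq_vert ?val_vert ?in_Wm ?val_vert; lia.
simpl; lia.
Qed.

Lemma minZF_Bu : minset (zero_forcing_set G) (vert 0 |: Wm r).
Proof.
apply: minZF_priv; first by apply: ZF_u; lia.
move=> b; rewrite !in_setU1 => /orP[/eqP ->|bW].
- exists F0; split; first exact: fort_F0.
  split; first by vt.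
  move=> y; rewrite !in_setU1 => /orP[/eqP ->|yW]; first by rewrite eqxx.
  move=> _; move: yW; rewrite in_Wm; last lia.
  rewrite inE; lia.
- exists [set b; vert r]; split.
    apply: fort_ww.
    + by move: bW; rewrite in_Wm; [rewrite inE; lia | lia].
    + vt.
    + by move: bW; rewrite in_Wm; [rewrite eq_vert; lia | lia].
  split; first by rewrite !inE eqxx.
  move=> y yB yb; rewrite !inE negb_or yb /=.
  move: yB; rewrite !in_setU1 => /orP[/eqP ->|yW].
  + rewrite eq_vertl ?val_vert; lia.
  + by move: yW; rewrite in_Wm; [rewrite eq_vert; lia | lia].
Qed.

Lemma Zbar_eq5 : 5 <= s -> Zbar G = r + 1.
Proof.
move=> h5; rewrite /Zbar; apply: bigmax_eq.
  by exists (vert (r+2) |: (vert (r+2+1) |: Wm r)); [exact: minZF_B5 | exact: card_B5].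
by move=> B /Zbar_upper [].
Qed.

Lemma Zbar_eq3 : s = 3 -> Zbar G = r.
Proof.
move=> h3; rewrite /Zbar; apply: bigmax_eq.
  exists (vert 0 |: Wm r); first exact: minZF_Bu.
  apply: card_uW; lia.
by move=> B /Zbar_upper [_]; apply.
Qed.

Lemma main1 : [/\ zir G = 2, Zf G = r & ZIR G = r + (s - 1) %/ 2].
Proof using hr hs hodd. by split; [exact: zir_eq | exact: Zf_eq | exact: ZIR_eq]. Qed.

Lemma main2 : 5 <= s -> Zbar G = r + 1.
Proof using hr hs hodd. exact: Zbar_eq5. Qed.

Lemma main3 : s = 3 -> Zbar G = r.
Proof using hr hs hodd. exact: Zbar_eq3. Qed.

End H.



Theorem proposition3p6 :
  (forall r s : nat, 2 <= r -> odd s -> 3 <= s ->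
     [/\ zir (H_adj r s) = 2,
         Zf (H_adj r s) = r &
         ZIR (H_adj r s) = r + (s - 1) %/ 2]) /\
  (forall r s : nat, 2 <= r -> odd s -> 5 <= s ->
     Zbar (H_adj r s) = r + 1) /\
  (forall r : nat, 2 <= r -> Zbar (H_adj r 3) = r).
Proof.
split; [|split].
- move=> r s hr hodd hs; exact: main1.
- move=> r s hr hodd hs; apply: main2 => //; exact: leq_trans hs.
- move=> r hr; exact: main3.
Qed.
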